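(* Let $n\ge4$ and for $1\le p\le n$ let $K_p$ be the set of regular elements of $\mathcal{OCT}_n$ whose image has exactly $p$ elements. Then for all $1\le p\le n-2$, $\langle K_p\rangle\subseteq\langle K_{p+1}\rangle$, where $\langle A\rangle$ denotes the subsemigroup of $\mathcal{T}_n$ generated by $A$.
   Context: $\mathcal{T}_n$ is the full transformation semigroup on $[n]=\{1,\dots,n\}$ under composition. $\alpha$ is a contraction if $|x\alpha-y\alpha|\le|x-y|$ for all $x,y$, order-preserving if $x\le y\Rightarrow x\alpha\le y\alpha$. $\mathcal{OCT}_n$ is the semigroup of order-preserving contractions; $\alpha\in\mathcal{OCT}_n$ is regular if $\alpha\beta\alpha=\alpha$ for some $\beta\in\mathcal{OCT}_n$. *)

(* Defs.v *)
(* [n] = {1,...,n} is modelled by 'I_n = {0,...,n-1}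
   (a shift by one, which preserves order and distances). *)
From mathcomp Require Import all_boot all_order.
Set Implicit Arguments. Unset Strict Implicit. Unset Printing Implicit Defensive.

Definition trans (n : nat) := {ffun 'I_n -> 'I_n}.

(* composition in the paper's (right action) convention: x (a b) = (x a) b *)
Definition tcomp n (a b : trans n) : trans n := [ffun x => b (a x)].

Definition ndist (x y : nat) : nat := (x - y) + (y - x).

Definition order_preserving n (a : trans n) : Prop :=
  forall x y : 'I_n, x <= y -> a x <= a y.

Definition contraction n (a : trans n) : Prop :=
  forall x y : 'I_n, ndist (a x) (a y) <= ndist x y.

Definition in_OCT n (a : trans n) : Prop :=
  order_preserving a /\ contraction a.

Definition regular_OCT n (a : trans n) : Prop :=
  in_OCT a /\ exists b : trans n, in_OCT b /\ tcomp (tcomp a b) a = a.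

Definition rank n (a : trans n) : nat := #|[set a x | x : 'I_n]|.

Definition K n (p : nat) (a : trans n) : Prop := regular_OCT a /\ rank a = p.

Inductive gen n (A : trans n -> Prop) : trans n -> Prop :=
| gen_base a : A a -> gen A a
| gen_comp a b : gen A a -> gen A b -> gen A (tcomp a b).

(* Main.v *)
Require Import Defs.
From mathcomp Require Import all_boot all_order.
From mathcomp Require Import zify.
Set Implicit Arguments. Unset Strict Implicit. Unset Printing Implicit Defensive.

Definition Fm m (s c q : nat) : trans m.+1 :=
  [ffun x : 'I_m.+1 => inord (c + minn (x - s) q.-1)].

Lemma Fm_val m s c q (x : 'I_m.+1) : 0 < q -> c + q <= m.+1 ->
  nat_of_ord (Fm m s c q x) = c + minn (x - s) q.-1.
Proof. move=> q0 cq; rewrite ffunE inordK //; lia. Qed.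

Lemma Fm_OCT m s c q : 0 < q -> c + q <= m.+1 -> in_OCT (Fm m s c q).
Proof.
move=> q0 cq; split.
  move=> x y xy; rewrite !Fm_val //; lia.
move=> x y; rewrite /ndist !Fm_val //; lia.
Qed.

Lemma rank_lem m (a : trans m.+1) c q : c + q <= m.+1 ->
  (forall x, c <= a x < c + q) -> (forall k, k < q -> exists x, nat_of_ord (a x) = c + k) ->
  rank a = q.
Proof.
move=> cq hb hs; rewrite /rank.
have -> : [set a x | x : 'I_m.+1] = [set (inord (c + nat_of_ord k) : 'I_m.+1) | k : 'I_q].
  apply/setP => y; apply/imsetP/imsetP.
    move=> [x _ ->]; have := hb x => /andP [h1 h2].
    have hk : a x - c < q by lia.
    exists (Ordinal hk) => //; apply val_inj; rewrite /= inordK; lia.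
  move=> [k _ ->]; have [x hx] := hs _ (ltn_ord k).
  exists x => //; apply val_inj; rewrite /= inordK -?hx //; have := ltn_ord k; lia.
rewrite card_imset ?card_ord //.
move=> k1 k2 /(congr1 val); rewrite /= !inordK; try (have := ltn_ord k1; have := ltn_ord k2; lia).
move=> h; apply val_inj => /=; lia.
Qed.

Lemma Fm_K m s c q : 0 < q -> s + q <= m.+1 -> c + q <= m.+1 -> K q (Fm m s c q).
Proof.
move=> q0 sq cq; split.
  split; first exact: Fm_OCT.
  exists (Fm m c s q); split; first exact: Fm_OCT.
  apply/ffunP => x; rewrite /tcomp !ffunE; apply val_inj.
  rewrite /= !inordK; lia.
apply: (rank_lem (c := c)) => //.
  move=> x; rewrite Fm_val //; lia.
move=> k kq; have hk : s + k < m.+1 by lia.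
exists (Ordinal hk); rewrite Fm_val //=; lia.
Qed.

Lemma ivt (f : nat -> nat) N : (forall i, i < N -> f i.+1 <= (f i).+1) ->
  forall j, j <= N -> forall v, f 0 <= v <= f j -> exists i, i <= j /\ f i = v.
Proof.
move=> hs; elim=> [|j IH] jN v /andP [h1 h2].
  by exists 0; split => //; apply/eqP; rewrite eqn_leq h1 h2.
case: (leqP v (f j)) => hv.
  have [i [ij fi]] := IH (ltnW jN) v (introT andP (conj h1 hv)).
  by exists i; split => //; apply: leqW.
exists j.+1; split => //; have := hs j jN; lia.
Qed.

Lemma regular_form m (a : trans m.+1) : regular_OCT a ->
  exists s c q, [/\ 0 < q, s + q <= m.+1, c + q <= m.+1 & a = Fm m s c q].
Proof.
move=> [[op ct] [b [[opb ctb] eq]]].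
pose f i := nat_of_ord (a (inord i)).
pose g i := nat_of_ord (b (inord i)).
have fmono : forall i j, i <= j -> j <= m -> f i <= f j.
  move=> i j ij jm; apply: op; rewrite !inordK //; lia.
have gmono : forall i j, i <= j -> j <= m -> g i <= g j.
  move=> i j ij jm; apply: opb; rewrite !inordK //; lia.
have fstep : forall i, i < m -> f i.+1 <= (f i).+1.
  move=> i im; have := ct (inord i) (inord i.+1); have := fmono i i.+1 (leqnSn i) im.
  rewrite /ndist !inordK //; rewrite -/(f i) -/(f i.+1); lia.
have gstep : forall i, i < m -> g i.+1 <= (g i).+1.
  move=> i im; have := ctb (inord i) (inord i.+1); have := gmono i i.+1 (leqnSn i) im.
  rewrite /ndist !inordK //; rewrite -/(g i) -/(g i.+1); lia.
have fb : forall i, f i < m.+1 by move=> i; exact: ltn_ord.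
have gb : forall i, g i < m.+1 by move=> i; exact: ltn_ord.
have reg : forall i, f (g (f i)) = f i.
  move=> i; rewrite /f /g !inord_val.
  by have := congr1 (fun h : trans m.+1 => nat_of_ord (h (inord i))) eq; rewrite /tcomp !ffunE.
pose c := f 0; pose t := f m; pose s := g c.
have ct0 : c <= t by apply: fmono.
have tm : t <= m by have := fb m; rewrite /t; lia.
have P : forall k, c + k <= t -> g (c + k) = s + k /\ f (s + k) = c + k.
  elim=> [|k IH] hk.
    by rewrite !addn0; split => //; rewrite /s /c reg.
  have [g1 f1] := IH ltac:(lia).
  have hv : f 0 <= c + k.+1 <= f m by rewrite -/c -/t leq_addr hk.
  have [y [_ fy]] := ivt fstep (leqnn m) hv.
  have r := reg y; rewrite fy in r.
  have s1 := gstep (c + k) ltac:(lia).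
  have s2 := gmono (c + k) (c + k.+1) ltac:(lia) ltac:(lia).
  rewrite addnS in s1 s2 r *; rewrite g1 in s1 s2.
  have [e|e] : g (c + k).+1 = s + k \/ g (c + k).+1 = (s + k).+1 by lia.
    by rewrite e f1 in r; lia.
  by rewrite e in r; rewrite addnS; split.
have [gt ft] := P (t - c) ltac:(lia).
have hst : s + (t - c) <= m by have := gb (c + (t - c)); rewrite gt; lia.
have form : forall x, x <= m -> f x = c + minn (x - s) (t - c).
  move=> x xm; case: (leqP x s) => xs.
    have := fmono 0 x (leq0n _) xm; have := fmono x s xs ltac:(lia).
    have [_ fs] := P 0 ltac:(lia); rewrite addn0 in fs; rewrite fs -/c; lia.
  case: (leqP (x - s) (t - c)) => hk.
    have [_ e] := P (x - s) ltac:(lia).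
    have -> : x = s + (x - s) by lia.
    rewrite e; lia.
  have h1 := fmono (s + (t - c)) x ltac:(lia) xm.
  have h2 := fmono x m xm (leqnn m).
  rewrite ft in h1; rewrite -/t in h2; lia.
exists s, c, (t - c).+1; split => //; try lia.
apply/ffunP => x; apply val_inj; rewrite ffunE /= inordK; last by lia.
have := form x (ltn_ord x) => /=; rewrite /f inord_val => ->; done.
Qed.

Lemma comp_Fm m s1 c1 q1 s2 c2 q2 s c q : 0 < q1 -> c1 + q1 <= m.+1 ->
  0 < q2 -> c2 + q2 <= m.+1 -> 0 < q -> c + q <= m.+1 ->
  (forall x, x <= m -> c2 + minn (c1 + minn (x - s1) q1.-1 - s2) q2.-1 = c + minn (x - s) q.-1) ->
  tcomp (Fm m s1 c1 q1) (Fm m s2 c2 q2) = Fm m s c q.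
Proof.
move=> ? ? ? ? ? ? h; apply/ffunP => x; apply val_inj.
rewrite /tcomp ffunE /= Fm_val // Fm_val // Fm_val // h //; have := ltn_ord x; lia.
Qed.

Lemma caseA m p s c : p.+2 <= m.+1 -> 0 < p -> 1 <= s -> s + p <= m.+1 -> c + p.+1 <= m.+1 ->
  gen (@K m.+1 p.+1) (Fm m s c p).
Proof.
move=> pm p0 s1 sp cp.
rewrite -(@comp_Fm m (s - 1) 0 p.+1 1 c p.+1) //.
all: try solve [lia | move=> x _ /=; lia | apply: gen_comp; apply: gen_base; apply: Fm_K => //; lia].
Qed.

Lemma caseB m p s c : p.+2 <= m.+1 -> 0 < p -> 1 <= c -> s + p.+1 <= m.+1 -> c + p <= m.+1 ->
  gen (@K m.+1 p.+1) (Fm m s c p).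
Proof.
move=> pm p0 c1 sp cp.
rewrite -(@comp_Fm m s 1 p.+1 0 (c - 1) p.+1) //.
all: try solve [lia | move=> x _ /=; lia | apply: gen_comp; apply: gen_base; apply: Fm_K => //; lia].
Qed.

Theorem proposition9 (n : nat) : 4 <= n ->
  forall p : nat, 1 <= p -> p <= n - 2 ->
  forall a : trans n, gen (@K n p) a -> gen (@K n p.+1) a.
Proof.
case: n => [//|m] hn p p1 pn a.
elim=> [{}a Ka | a1 a2 _ IH1 _ IH2]; last exact: gen_comp.
have [s [c [q [q0 sq cq ea]]]] := regular_form Ka.1.
have eq : q = p.
  by have := Ka.2; rewrite ea; have [_ ->] := Fm_K q0 sq cq.
subst a q.
case: (leqP 1 s) => hs; case: (leqP (c + p.+1) m.+1) => hc.
- apply: caseA => //; lia.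
- case: (leqP (s + p.+1) m.+1) => hs2; first by apply: caseB => //; lia.
  (* s = c = m.+1 - p *)
  rewrite -(@comp_Fm m (m - p) (m - p - 1) p.+1 (m - p) (m.+1 - p) p) //.
  all: try solve [lia | move=> x _ /=; lia | apply: gen_comp; [apply: gen_base; apply: Fm_K => //; lia | apply: caseB => //; lia]].
- have s0 : s = 0 by lia.
  case: (leqP 1 c) => hc1; first by apply: caseB => //; lia.
  have c0 : c = 0 by lia.
  subst s c.
  rewrite -(@comp_Fm m 0 1 p.+1 1 0 p) //.
  all: try solve [lia | move=> x _ /=; lia | apply: gen_comp; [apply: gen_base; apply: Fm_K => //; lia | apply: caseA => //; lia]].
- by apply: caseB => //; lia.
Qed.
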